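(* If $\mathcal{F}$ is a uniformly Lipschitz collection of maps between metric spaces (i.e. $\sup_{F\in\mathcal{F}}\mathrm{Lip}(F)<\infty$), then $\lim_n a_n(\mathcal{F})$ exists and equals $\inf_n a_n(\mathcal{F})$.
   Context: Convention $\frac00=0$. $\mathrm{Lip}(g)=\sup_{x,y}d_V(g(x),g(y))/d_U(x,y)$. $2^n=\{\pm1\}^n$ carries the normalized Hamming metric $\partial(\varepsilon,\delta)=\frac1n|\{i:\varepsilon(i)\ne\delta(i)\}|$ and the uniform probability measure (expectation $\mathbb{E}$). $a_n(\mathcal{F})$ is the infimum of those $a>0$ such that for every $F:X\to Y$ in $\mathcal{F}$ and every $f:2^n\to X$, $\mathbb{E}\,d_Y(F\circ f(\varepsilon),F\circ f(-\varepsilon))\le a\,\mathrm{Lip}(f:2^n\to X)$. *)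

(* Defs.v *)
From HB Require Import structures.
From mathcomp Require Import all_boot all_order all_algebra.
From mathcomp Require Import all_classical all_reals all_analysis.
Set Implicit Arguments. Unset Strict Implicit. Unset Printing Implicit Defensive.
Import Order.TTheory GRing.Theory Num.Theory.
Local Open Scope classical_set_scope.
Local Open Scope ring_scope.

Record metric_space (R : realType) := MetricSpace {
  mcarrier :> Type;
  msp_dist : mcarrier -> mcarrier -> R;
  msp_dist_eq0 : forall x y, msp_dist x y = 0 <-> x = y;
  msp_dist_sym : forall x y, msp_dist x y = msp_dist y x;
  msp_dist_triangle : forall x y z, msp_dist x z <= msp_dist x y + msp_dist y z
}.

(* Lipschitz constant sup_{x,y} dV(g x, g y)/dU(x,y), in the extended reals,
   with the convention 0/0 = 0 (which is MathComp's x / 0 = 0). *)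

Definition LipE (R : realType) (U V : Type) (dU : U -> U -> R) (dV : V -> V -> R)
  (g : U -> V) : \bar R :=
  ereal_sup [set ((dV (g p.1) (g p.2)) / dU p.1 p.2)%:E | p in [set: U * U]].

(* The discrete cube 2^n = {+-1}^n, encoded as boolean vectors; -eps is
   pointwise negation. *)
Definition cube (n : nat) := {ffun 'I_n -> bool}.
Definition cneg (n : nat) (e : cube n) : cube n := [ffun i => ~~ e i].

Definition hamming (R : realType) (n : nat) (e d : cube n) : R :=
  #|[set i | e i != d i]|%:R / n%:R.

Definition cubeE (R : realType) (n : nat) (h : cube n -> R) : R :=
  (\sum_(e : cube n) h e) / (2 ^ n)%:R.

Definition a_n (R : realType) (I : Type) (X Y : I -> metric_space R)
  (F : forall i, X i -> Y i) (n : nat) : \bar R :=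
  ereal_inf [set a%:E | a in [set a : R | 0 < a /\
     forall (i : I) (f : cube n -> X i),
       ((cubeE (fun e => msp_dist (F i (f e)) (F i (f (cneg e)))))%:E
         <= a%:E * LipE (@hamming R n) (@msp_dist R (X i)) f)%E]].

(* Main.v *)
Require Import Defs.
From HB Require Import structures.
From mathcomp Require Import all_boot all_order all_algebra.
From mathcomp Require Import all_classical all_reals all_analysis.
From mathcomp Require Import ring lra.
Import Order.TTheory GRing.Theory Num.Theory.

Definition blk (n m : nat) (j : 'I_m) : 'I_n.+1 := Ordinal (ltn_pmod j (ltn0Sn n)).
Arguments blk n {m} j.
Definition cshift (n m : nat) (e : cube m) (d : cube n.+1) : cube m :=
  [ffun j => e j (+) d (blk n j)].

Arguments cshift {n m} e d.
Lemma cneg_cshift n m (e : cube m) (d : cube n.+1) :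
  cneg (cshift e d) = cshift e (cneg d).
Proof. by apply/ffunP => j; rewrite !ffunE addbN. Qed.

Lemma cshift_inj n m (d : cube n.+1) : injective (fun e : cube m => cshift e d).
Proof.
move=> e e' /ffunP H; apply/ffunP => j; move: (H j); rewrite !ffunE.
exact: addIb.
Qed.

Lemma fibre_card n m (k : 'I_n.+1) :
  (#|[set j : 'I_m | blk n j == k]| <= (m %/ n.+1).+1)%N.
Proof.
set S := [set j : 'I_m | blk n j == k].
have inj : {in S &, injective (fun j : 'I_m => (inord (j %/ n.+1) : 'I_(m %/ n.+1).+1))}.
  move=> j j'; rewrite !inE => /eqP hj /eqP hj' /(congr1 val) /=.
  have bd : forall i : 'I_m, i %/ n.+1 <= m %/ n.+1.
    by move=> i; apply: leq_div2r; apply: ltnW.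
  rewrite !inordK ?ltnS ?bd // => hq.
  apply: val_inj => /=.
  have := congr1 val hj; have := congr1 val hj'; rewrite /= => h1 h2.
  by rewrite (divn_eq j n.+1) (divn_eq j' n.+1) hq h1 h2.
rewrite -(card_in_imset inj).
by apply: leq_trans (max_card _) _; rewrite card_ord.
Qed.

Lemma cshift_card n m (e : cube m) (d d' : cube n.+1) :
  (#|[set j | cshift e d j != cshift e d' j]| <= (m %/ n.+1).+1 * #|[set k | d k != d' k]|)%N.
Proof.
have -> : [set j | cshift e d j != cshift e d' j] = [set j | blk n j \in [set k | d k != d' k]].
  by apply/setP => j; rewrite !inE !ffunE (can_eq (addKb _)).
rewrite -sum1_card (partition_big (blk n) (mem [set k | d k != d' k])) //=.
rewrite mulnC -sum_nat_const; apply: leq_sum => k kD.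
apply: leq_trans _ (@fibre_card n m k); rewrite -sum1_card.
rewrite big_mkcond /= [X in (_ <= X)%N]big_mkcond /=; apply: leq_sum => j _.
by rewrite !inE; case: (blk n j == k); rewrite ?andbT ?andbF //; case: ifP.
by move=> i; rewrite inE.
Qed.

Local Open Scope ring_scope.

Lemma hamE (R : realType) n (e d : cube n) :
  @hamming R n e d = (#|[set i | e i != d i]|%:R / n%:R :> R)%R.
Proof.
rewrite /hamming; congr (_%:R / _)%R; apply: eq_card => i.
by rewrite inE /=; apply/idP/idP; rewrite in_setE.
Qed.

Lemma ham_ge0 (R : realType) n (e d : cube n) : 0 <= @hamming R n e d.
Proof. by rewrite hamE divr_ge0. Qed.

Lemma ham_xx (R : realType) n (e : cube n) : @hamming R n e e = 0.
Proof.
rewrite hamE; apply/eqP; rewrite mulf_eq0 pnatr_eq0 cards_eq0; apply/orP; left.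
by apply/eqP/setP => i; rewrite !inE eqxx.
Qed.

Lemma ham_eq0 (R : realType) n (e d : cube n) : @hamming R n e d = 0 -> e = d.
Proof.
rewrite hamE => /eqP; rewrite mulf_eq0 invr_eq0 !pnatr_eq0 => /orP [|/eqP n0].
  rewrite cards_eq0 => /eqP H; apply/ffunP => i.
  apply/eqP; apply: contraT => hi; have : i \in [set i | e i != d i] by rewrite inE hi.
  by rewrite H inE.
by subst n; apply/ffunP => -[].
Qed.

Lemma dist_ge0 (R : realType) (X : metric_space R) (x y : X) : 0 <= msp_dist x y.
Proof.
have := msp_dist_triangle x y x; rewrite (proj2 (msp_dist_eq0 x x)) //.
rewrite (msp_dist_sym y x); lra.
Qed.

Lemma LipE_ub (R : realType) (U V : Type) (dU : U -> U -> R) (dV : V -> V -> R)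
  (g : U -> V) x y : (((dV (g x) (g y)) / dU x y)%:E <= LipE dU dV g)%E.
Proof. by apply: ereal_sup_ubound; exists (x, y). Qed.

Lemma LipE_le (R : realType) (U V : Type) (dU : U -> U -> R) (dV : V -> V -> R)
  (g : U -> V) (r : \bar R) :
  (forall x y, ((dV (g x) (g y)) / dU x y)%:E <= r)%E -> (LipE dU dV g <= r)%E.
Proof. by move=> H; apply: ge_ereal_sup => _ [[x y] _ <-]. Qed.

Definition cnm (R : realType) n m : R := (n.+1 * (m %/ n.+1).+1)%:R / m%:R.

Lemma core (R : realType) (Xi Yi : metric_space R) (Fi : Xi -> Yi) n m (a : R) :
 (0 < m)%N -> 0 < a ->
 (forall g : cube n.+1 -> Xi,
   ((@cubeE R _ (fun e => msp_dist (Fi (g e)) (Fi (g (cneg e)))))%:E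
     <= a%:E * LipE (@hamming R n.+1) (@msp_dist R Xi) g)%E) ->
 forall f : cube m -> Xi,
   ((@cubeE R _ (fun e => msp_dist (Fi (f e)) (Fi (f (cneg e)))))%:E
     <= (a * cnm R n m)%:E * LipE (@hamming R m) (@msp_dist R Xi) f)%E.
Proof.
move=> m0 a0 Hadm f.
have c0 : 0 < cnm R n m by rewrite /cnm divr_gt0 // ltr0n // muln_gt0.
set h := fun e : cube m => @msp_dist R Yi (Fi (f e)) (Fi (f (cneg e))).
pose e0 : cube m := [ffun => false].
have L0 : (0%E <= LipE (@hamming R m) (@msp_dist R Xi) f)%E.
  apply: le_trans (@LipE_ub R _ _ _ _ f e0 e0); by rewrite ham_xx invr0 mulr0.
case E: (LipE _ _ f) L0 => [l| |] // L0; last first.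
  by rewrite muleC gt0_mulye ?lte_fin ?(mulr_gt0 a0 c0) // leey.
rewrite lee_fin in L0; rewrite -EFinM lee_fin.
have Hf : forall x y, msp_dist (f x) (f y) <= l * @hamming R m x y.
  move=> x y; have [->|hxy] := eqVneq x y.
    by rewrite ham_xx mulr0 (proj2 (msp_dist_eq0 _ _)).
  have hp : 0 < @hamming R m x y.
    by rewrite lt0r ham_ge0 andbT; apply: contra_neq hxy => /ham_eq0.
  rewrite -ler_pdivrMr //; have := @LipE_ub R _ _ (@hamming R m) (@msp_dist R Xi) f x y.
  by rewrite E lee_fin.
have Hsh : forall (e : cube m) (d d' : cube n.+1),
    @hamming R m (cshift e d) (cshift e d') <= cnm R n m * @hamming R n.+1 d d'.
  move=> e d d'; rewrite !hamE /cnm.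
  apply: (@le_trans _ _ (((m %/ n.+1).+1 * #|[set k | d k != d' k]|)%:R / m%:R)).
    by rewrite ler_pM2r ?invr_gt0 ?ltr0n // ler_nat cshift_card.
  rewrite le_eqVlt; apply/orP; left; apply/eqP; rewrite !natrM; field.
  by rewrite addrC natr1 !pnatr_eq0 /= -lt0n.
have Hg : forall e : cube m, @cubeE R n.+1 (fun d => msp_dist (Fi (f (cshift e d))) (Fi (f (cshift e (cneg d)))))
     <= a * (l * cnm R n m).
  move=> e; have := Hadm (fun d => f (cshift e d)) => /= H.
  have HL : (LipE (@hamming R n.+1) (@msp_dist R Xi) (fun d => f (cshift e d)) <= (l * cnm R n m)%:E)%E.
    apply: LipE_le => d d'; rewrite lee_fin.
    have [h0|hn0] := eqVneq (@hamming R n.+1 d d') 0.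
      by rewrite h0 invr0 mulr0 mulr_ge0 // ltW.
    have hp : 0 < @hamming R n.+1 d d' by rewrite lt0r hn0 ham_ge0.
    rewrite ler_pdivrMr //; apply: le_trans (Hf _ _) _.
    by rewrite -mulrA ler_wpM2l.
  rewrite -lee_fin; apply: le_trans H _; rewrite EFinM.
  by apply: lee_wpmul2l => //; rewrite lee_fin ltW.
rewrite /cubeE -/h.
set S := \sum_e h e.
have key : (2 ^ n.+1)%:R * S = \sum_(e : cube m) \sum_(d : cube n.+1) h (cshift e d).
  rewrite exchange_big /= (eq_bigr (fun _ => S)); last first.
    by move=> d _; rewrite /S [RHS](reindex_inj (@cshift_inj n m d)).
  by rewrite sumr_const card_ffun card_bool card_ord mulr_natl.
have p2 : 0 < (2 ^ n.+1)%:R :> R by rewrite ltr0n expn_gt0.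
have pm : 0 < (2 ^ m)%:R :> R by rewrite ltr0n expn_gt0.
have HS : S <= (2 ^ m)%:R * (a * (l * cnm R n m)).
  rewrite -(ler_pM2l p2) key.
  apply: (@le_trans _ _ (\sum_(e : cube m) ((2 ^ n.+1)%:R * (a * (l * cnm R n m))))).
    apply: ler_sum => e _; have := Hg e; rewrite /cubeE ler_pdivrMr // mulrC.
    by apply: le_trans; apply: ler_sum => d _; rewrite /h cneg_cshift.
  rewrite sumr_const card_ffun card_bool card_ord -mulr_natl; lra.
rewrite ler_pdivrMr //.
have -> : a * cnm R n m * l * (2 ^ m)%:R = (2 ^ m)%:R * (a * (l * cnm R n m)) by ring.
exact: HS.
Qed.

Lemma cnm_le (R : realType) n m : (0 < m)%N -> cnm R n m <= 1 + n.+1%:R / m%:R.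
Proof.
move=> m0; rewrite /cnm.
have mp : 0 < m%:R :> R by rewrite ltr0n.
have -> : 1 + n.+1%:R / m%:R = (m + n.+1)%:R / m%:R :> R.
  by rewrite natrD mulrDl divff // gt_eqF.
rewrite ler_pM2r ?invr_gt0 // ler_nat mulnS addnC leq_add2r mulnC.
exact: leq_divM.
Qed.

Lemma a_n_ge0 (R : realType) (I : Type) (X Y : I -> metric_space R)
  (F : forall i, X i -> Y i) n : (0 <= @a_n R I X Y F n)%E.
Proof. by apply: le_ereal_inf_tmp => _ [b [b0 _] <-]; rewrite lee_fin ltW. Qed.

Local Open Scope classical_set_scope.
Local Open Scope ring_scope.

Theorem proposition5p2 (R : realType) (I : Type) (X Y : I -> metric_space R)
  (F : forall i, X i -> Y i) :
  (exists L : R, forall i, LipE (@msp_dist R (X i)) (@msp_dist R (Y i)) (F i) <= L%:E)%E ->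
  (@a_n R I X Y F n @[n --> \oo] --> ereal_inf [set @a_n R I X Y F n | n in [set n | (0 < n)%N]])%E.
Proof.
move=> _.
set u := fun n => @a_n R I X Y F n.
rewrite -/u.
set A := ereal_inf _.
have Alb : forall m, (0 < m)%N -> (A <= u m)%E.
  by move=> m m0; apply: ereal_inf_lbound; exists m.
have A0 : (0 <= A)%E by apply: le_ereal_inf_tmp => _ [n _ <-]; apply: a_n_ge0.
have Hub : forall n b, 0 < b ->
   (forall i (f : cube n.+1 -> X i),
       ((@cubeE R n.+1 (fun e => msp_dist (F i (f e)) (F i (f (cneg e)))))%:E
         <= b%:E * LipE (@hamming R n.+1) (@msp_dist R (X i)) f)%E) ->
   forall m, (0 < m)%N -> (u m <= (b * cnm R n m)%:E)%E.
  move=> n b b0 Hb m m0; apply: ereal_inf_lbound; exists (b * cnm R n m) => //.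
  split; first by rewrite mulr_gt0 // /cnm divr_gt0 // ltr0n // muln_gt0.
  by move=> i f; apply: core => //; apply: Hb.
case EA : A A0 => [r| |] // A0.
  have getb : forall s : R, r < s -> exists n b, [/\ 0 < b, b < s &
     (forall i (f : cube n.+1 -> X i),
       ((@cubeE R n.+1 (fun e => msp_dist (F i (f e)) (F i (f (cneg e)))))%:E
         <= b%:E * LipE (@hamming R n.+1) (@msp_dist R (X i)) f)%E)].
    move=> s rs; have : (A < s%:E)%E by rewrite EA lte_fin.
    move=> /ereal_inf_lt [_ [[|n] //= n0 <-]] /ereal_inf_lt [_ [b [b0 Hb] <-]].
    by rewrite lte_fin => bs; exists n, b; split.
  have u0 := @a_n_ge0 R I X Y F.
  apply/fine_cvgP; split.
    have r1 : r < r + 1 by rewrite ltrDl ltr01.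
    have [n [b [b0 _ Hb]]] := getb (r + 1) r1.
    apply: filterS (nbhs_infty_ge 1) => m m1.
    rewrite ge0_fin_numE ?u0 //; apply: le_lt_trans (Hub n b b0 Hb m m1) _.
    exact: ltey.
  apply/cvgrPdist_le => e e0.
  have re : r < r + e / 2 by rewrite ltrDl divr_gt0.
  have [n [b [b0 bs Hb]]] := getb (r + e / 2) re.
  set N := Num.Def.archi_bound (b * n.+1%:R * 2 / e).
  have HN : b * n.+1%:R * 2 / e < N%:R.
    by apply: archi_boundP; rewrite divr_ge0 ?mulr_ge0 ?ltW.
  apply: filterS (nbhs_infty_ge N.+1) => m mN /=.
  have m0 : (0 < m)%N by apply: leq_trans mN.
  have hu := Hub n b b0 Hb m m0.
  have hl := Alb m m0.
  have fu : u m \is a fin_num.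
    by rewrite ge0_fin_numE ?u0 //; apply: le_lt_trans hu (ltey _).
  rewrite -(fineK fu) EA lee_fin in hl.
  rewrite -(fineK fu) lee_fin in hu.
  set x := fine (u m) in hl hu *.
  have hc := @cnm_le R n m m0.
  have mp : 0 < m%:R :> R by rewrite ltr0n.
  have Nm : N%:R <= m%:R :> R by rewrite ler_nat ltnW.
  have t1 : b * n.+1%:R * 2 < N%:R * e by rewrite -ltr_pdivrMr.
  have t4 : N%:R * e <= m%:R * e by rewrite ler_wpM2r // ltW.
  have t2 : b * n.+1%:R / m%:R <= e / 2.
    rewrite ler_pdivrMr //.
    have -> : e / 2 * m%:R = (m%:R * e) / 2 by ring.
    move: t1 t4; generalize (b * n.+1%:R) (N%:R * e) (m%:R * e) => p q z; lra.
  have t3 : b * cnm R n m <= b + b * n.+1%:R / m%:R.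
    by rewrite -{2}(mulr1 b) -mulrA -mulrDr ler_wpM2l // ltW.
  rewrite distrC ger0_norm ?subr_ge0 //.
  move: hl hu t2 t3 bs; generalize (b * cnm R n m) (b * n.+1%:R / m%:R) => p q.
  clear; lra.
apply/cvgeyPge => M; apply: filterS (nbhs_infty_ge 1) => m m1.
by have := Alb m m1; rewrite EA leye_eq => /eqP ->; apply: leey.
Qed.
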